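(* Let $(X,\mathcal U)$ be a non-archimedean uniform space and let $G$ be one of $F_{NA}(X,\mathcal U)$, $F^b_{NA}(X,\mathcal U)$, $A_{NA}(X,\mathcal U)$, $B_{NA}(X,\mathcal U)$, with universal map $i\colon X\to G$. Then: (1) $i\colon(X,\mathcal U)\to G$ is a uniform embedding; (2) if $G\in\{F_{NA},F^b_{NA}\}$ then $G$ is algebraically the free group on $i(X)$; if $G=A_{NA}$ (resp. $G=B_{NA}$) then $G$ is algebraically isomorphic to the free abelian group $A(X)$ (resp. the free Boolean group $B(X)$) on $i(X)$; (3) $i(X)$ is a closed subspace of $G$.
   Context: All uniform spaces and groups are Hausdorff; topological groups carry their two-sided uniformity. A uniform space is non-archimedean if its uniformity has a base of equivalence relations. A topological group is non-archimedean if it has a local base at the identity of open subgroups; balanced if its left and right uniformities coincide; Boolean if every non-identity element has order 2. For a class $\Omega$ of topological groups, $F_\Omega(X,\mathcal U)$ is a group in $\Omega$ with uniformly continuous $i\colon X\to F_\Omega$ such that every uniformly continuous map from $X$ to a group in $\Omega$ factors uniquely as a continuous homomorphism composed with $i$. $F_{NA},F^b_{NA},A_{NA},B_{NA}$ are these for $\Omega$ = non-archimedean, balanced non-archimedean, abelian non-archimedean, Boolean non-archimedean groups respectively. *)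

(* Defs.v *)
From HB Require Import structures.
From mathcomp Require Import all_boot all_order all_algebra.
From mathcomp Require Import all_classical all_reals all_analysis.

Set Implicit Arguments.
Unset Strict Implicit.
Unset Printing Implicit Defensive.

Local Open Scope classical_set_scope.

Record group_ops (T : Type) := GroupOps {
  gmul : T -> T -> T;
  ginv : T -> T;
  gone : T;
  gmulA : forall x y z, gmul x (gmul y z) = gmul (gmul x y) z;
  gmul1 : forall x, gmul gone x = x;
  gmulV : forall x, gmul (ginv x) x = gone }.

Record Group := MkGroup { g_car :> Type; g_ops : group_ops g_car }.

Record TopGroup := MkTopGroup {
  tg_car :> topologicalType;
  tg_ops : group_ops tg_car;
  tg_mul_cont : continuous (fun p : tg_car * tg_car => gmul tg_ops p.1 p.2);
  tg_inv_cont : continuous (ginv tg_ops);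
  tg_hausdorff : hausdorff_space tg_car }.

Definition is_hom (A B : Type) (gA : group_ops A) (gB : group_ops B)
  (f : A -> B) : Prop :=
  forall x y, f (gmul gA x y) = gmul gB (f x) (f y).

Definition is_subgroup (A : Type) (gA : group_ops A) (S : set A) : Prop :=
  S (gone gA) /\ (forall x y, S x -> S y -> S (gmul gA x y)) /\
  (forall x, S x -> S (ginv gA x)).

Definition abelian_ops (A : Type) (gA : group_ops A) : Prop :=
  forall x y, gmul gA x y = gmul gA y x.

Definition boolean_ops (A : Type) (gA : group_ops A) : Prop :=
  forall x, x <> gone gA -> gmul gA x x = gone gA.

Section TGUnif.
Variable G : TopGroup.
Local Notation "x * y" := (gmul (tg_ops G) x y).
Local Notation "x ^-1" := (ginv (tg_ops G) x).
Local Notation one := (gone (tg_ops G)).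

Definition left_ent : set_system (G * G) :=
  [set E | exists2 U : set G, nbhs one U & [set p | U (p.1^-1 * p.2)] `<=` E].
Definition right_ent : set_system (G * G) :=
  [set E | exists2 U : set G, nbhs one U & [set p | U (p.2 * p.1^-1)] `<=` E].
Definition two_ent : set_system (G * G) :=
  [set E | exists2 U : set G, nbhs one U &
     [set p | U (p.1^-1 * p.2) /\ U (p.2 * p.1^-1)] `<=` E].

Definition nonarch_group : Prop :=
  forall U : set G, nbhs one U ->
    exists V : set G, [/\ open V, is_subgroup (tg_ops G) V & V `<=` U].

Definition balanced_group : Prop := left_ent = right_ent.
End TGUnif.

Definition equiv_rel_set (X : Type) (R : set (X * X)) : Prop :=
  [/\ forall x, R (x, x),
      forall x y, R (x, y) -> R (y, x) &
      forall x y z, R (x, y) -> R (y, z) -> R (x, z)].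

Definition na_uniform (X : uniformType) : Prop :=
  forall E, entourage E ->
    exists2 R : set (X * X), entourage R & equiv_rel_set R /\ R `<=` E.

Definition unif_cont_tg (X : uniformType) (G : TopGroup) (f : X -> G) : Prop :=
  forall E, two_ent E -> entourage [set p : X * X | E (f p.1, f p.2)].

Definition unif_embedding (X : uniformType) (G : TopGroup) (f : X -> G) : Prop :=
  [/\ injective f, unif_cont_tg f &
      forall E, entourage E ->
        exists2 D, two_ent D & forall x y, D (f x, f y) -> E (x, y)].

Inductive NAclass := cNA | cNAb | cANA | cBNA.

Definition in_class (c : NAclass) (G : TopGroup) : Prop :=
  nonarch_group G /\
  match c with
  | cNA => True
  | cNAb => balanced_group G
  | cANA => abelian_ops (tg_ops G)
  | cBNA => boolean_ops (tg_ops G)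
  end.

Definition alg_class (c : NAclass) (H : Group) : Prop :=
  match c with
  | cNA | cNAb => True
  | cANA => abelian_ops (g_ops H)
  | cBNA => boolean_ops (g_ops H)
  end.

Definition free_object (P : TopGroup -> Prop) (X : uniformType)
  (G : TopGroup) (i : X -> G) : Prop :=
  [/\ P G, unif_cont_tg i &
      forall (H : TopGroup) (f : X -> H), P H -> unif_cont_tg f ->
        exists phi : G -> H,
          [/\ is_hom (tg_ops G) (tg_ops H) phi, continuous phi,
              (forall x, phi (i x) = f x) &
              forall psi : G -> H,
                is_hom (tg_ops G) (tg_ops H) psi -> continuous psi ->
                (forall x, psi (i x) = f x) -> forall g, psi g = phi g]].

Definition alg_free (Q : Group -> Prop) (X : Type) (A : Type)
  (gA : group_ops A) (i : X -> A) : Prop :=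
  forall (H : Group) (f : X -> H), Q H ->
    exists phi : A -> H,
      [/\ is_hom gA (g_ops H) phi,
          (forall x, phi (i x) = f x) &
          forall psi : A -> H, is_hom gA (g_ops H) psi ->
            (forall x, psi (i x) = f x) -> forall a, psi a = phi a].

(* Main.v *)
Require Import Defs.
From mathcomp Require Import all_boot all_order all_algebra.
From mathcomp Require Import all_classical all_reals all_analysis.
Set Implicit Arguments.
Unset Strict Implicit.
Unset Printing Implicit Defensive.
Local Open Scope classical_set_scope.

Lemma gmulVr (T : Type) (g : group_ops T) x : gmul g x (ginv g x) = gone g.
Proof.
set y := gmul g x (ginv g x).
have yy : gmul g y y = y.
  by rewrite /y -gmulA [gmul g (ginv g x) _]gmulA gmulV gmul1.
by rewrite -[y in LHS](gmul1 g) -(gmulV g y) -gmulA yy.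
Qed.

Lemma gmulr1 (T : Type) (g : group_ops T) x : gmul g x (gone g) = x.
Proof. by rewrite -(gmulV g x) gmulA gmulVr gmul1. Qed.

Lemma gmulKl (T : Type) (g : group_ops T) a x y :
  gmul g a x = gmul g a y -> x = y.
Proof.
move=> h; by rewrite -[x](gmul1 g) -[y](gmul1 g) -(gmulV g a) -!gmulA h.
Qed.

Lemma ginv_uniq (T : Type) (g : group_ops T) a b :
  gmul g a b = gone g -> a = ginv g b.
Proof.
move=> h; by rewrite -[a](@gmulr1 _ g) -(gmulVr g b) gmulA h gmul1.
Qed.

Lemma hom1 (A B : Type) (gA : group_ops A) (gB : group_ops B) (f : A -> B) :
  is_hom gA gB f -> f (gone gA) = gone gB.
Proof.
move=> h; apply: (@gmulKl _ gB (f (gone gA))).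
by rewrite -h gmul1 gmulr1.
Qed.

Lemma homV (A B : Type) (gA : group_ops A) (gB : group_ops B) (f : A -> B) :
  is_hom gA gB f -> forall x, f (ginv gA x) = ginv gB (f x).
Proof.
move=> h x; apply: ginv_uniq; by rewrite -h gmulV (hom1 h).
Qed.

Definition dcar (H : Defs.Group) := discrete_topology (classicType (g_car H)).

Lemma disc_cont (T : topologicalType) (H : Defs.Group) (f : T -> dcar H) :
  (forall x, nbhs x (f @^-1` [set f x])) -> continuous f.
Proof.
move=> h x U /= Ux; have := h x; apply: filterS => y /= ->.
exact: nbhs_singleton Ux.
Qed.

Lemma disc_nbhs (H : Defs.Group) (x : dcar H) (U : set (dcar H)) :
  U x -> nbhs x U.
Proof. move=> Ux; have := @discrete_set1 _ x; apply: (@filterS _ (nbhs x)) => y ->. done. Qed.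

Lemma dmul_cont (H : Defs.Group) :
  continuous (fun p : dcar H * dcar H => (gmul (g_ops H) p.1 p.2 : dcar H)).
Proof.
apply: disc_cont => -[a b].
exists ([set a], [set b]) => /=; first by split; apply: disc_nbhs.
by case=> x y /= [-> ->].
Qed.

Lemma dinv_cont (H : Defs.Group) : continuous (fun x : dcar H => (ginv (g_ops H) x : dcar H)).
Proof.
apply: disc_cont => x; apply: disc_nbhs => /=. done.
Qed.

Definition DTG (H : Defs.Group) : TopGroup :=
  @MkTopGroup (dcar H) (g_ops H) (@dmul_cont H) (@dinv_cont H) discrete_hausdorff.

Lemma DTG_class (c : NAclass) (H : Defs.Group) : alg_class c H -> in_class c (DTG H).
Proof.
move=> hc; split.
  move=> U hU; exists [set gone (g_ops H)]; split.
  - exact: discrete_open.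
  - split; first done. split; first by move=> x y -> ->; rewrite gmul1.
    by move=> x ->; rewrite -[ginv _ _](gmulr1 (g_ops H)) gmulV.
  - by move=> x ->; exact: nbhs_singleton hU.
case: c hc => //= _.
have key : forall E : set (DTG H * DTG H),
   left_ent E \/ right_ent E -> (forall x, E (x, x)).
  move=> E [[U hU sub]|[U hU sub]] x; apply: sub => /=.
    by rewrite gmulV; exact: nbhs_singleton hU.
  by rewrite gmulVr; exact: nbhs_singleton hU.
rewrite /balanced_group; apply/funext => E; apply/propext; split => hE.
  exists [set gone (g_ops H)]; first exact: disc_nbhs.
  move=> [a b] /= e; have -> : b = a.
    by rewrite -[b](gmulr1 (g_ops H)) -(gmulV (g_ops H) a) gmulA e gmul1.
  exact: key (or_introl hE) a.
exists [set gone (g_ops H)]; first exact: disc_nbhs.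
move=> [a b] /= e; have -> : b = a.
  by rewrite -[b](gmul1 (g_ops H)) -(gmulVr (g_ops H) a) -gmulA e gmulr1.
exact: key (or_intror hE) a.
Qed.

Lemma two_ent_diag (G : TopGroup) (E : set (G * G)) : two_ent E -> forall x, E (x, x).
Proof.
move=> [U hU sub] x; apply: sub; split => /=; rewrite ?gmulV ?gmulVr; exact: nbhs_singleton hU.
Qed.

Lemma univ_disc (c : NAclass) (X : uniformType) (G : TopGroup) (i : X -> G) :
  free_object (in_class c) i ->
  forall (H : Defs.Group) (f : X -> H) (R : set (X * X)), alg_class c H ->
  entourage R -> (forall x y, R (x, y) -> f x = f y) ->
  exists phi : G -> H, [/\ is_hom (tg_ops G) (g_ops H) phi,
     (forall x, phi (i x) = f x) & forall g, nbhs g (phi @^-1` [set phi g])].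
Proof.
case=> _ _ U H f R hc eR fR.
have uf : unif_cont_tg (f : X -> DTG H).
  move=> E hE; apply: filterS eR => -[x y] /= /fR ->.
  exact: two_ent_diag hE _.
have [phi [hom ct fi _]] := U (DTG H) f (DTG_class hc) uf.
exists phi; split => // g.
by apply: (ct g); apply: (@disc_nbhs H (phi g)).

Qed.

Definition bops (X : Type) : group_ops (X -> bool).
refine (@GroupOps _ (fun a b z => xorb (a z) (b z)) id (fun _ => false) _ _ _).
- move=> x y z; apply: funext => t /=; by case: (x t); case: (y t); case: (z t).
- move=> x; apply: funext => t /=; done.
- move=> x; apply: funext => t /=; by case: (x t).
Defined.

Definition BG (X : Type) : Defs.Group := @MkGroup (X -> bool) (bops X).

Lemma BG_class (c : NAclass) (X : Type) : alg_class c (BG X).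
Proof.
case: c => //=.
- move=> x y; apply: funext => t /=; by case: (x t); case: (y t).
- move=> x _; apply: funext => t /=; by case: (x t).
Qed.

Lemma haus_ent (X : uniformType) : hausdorff_space X ->
  forall x y : X, x <> y -> exists2 E, entourage E & ~ E (x, y).
Proof.
move=> hX x y nxy; case: (pselect (exists2 E : set (X * X), entourage E & ~ E (x, y))) => // h.
exfalso; apply: nxy; apply: hX => A B /nbhsP [E eE sA] By.
exists y; split; last exact: nbhs_singleton By.
apply: sA; rewrite /xsection /=; apply/mem_set; case: (pselect (E (x, y))) => // nE.
by exfalso; apply: h; exists E.
Qed.

Definition sepR (X : eqType) (R : set (X * X)) (s : seq X) :=
  forall a b, a \in s -> b \in s -> R (a, b) -> a = b.

Lemma ex_sep1 (X : uniformType) : hausdorff_space X ->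
  forall (a : X) (t : seq X), exists2 E, entourage E &
    forall b, b \in t -> E (a, b) -> a = b.
Proof.
move=> hX a; elim=> [|b t [E eE hE]].
  by exists setT => //; exact: entourageT.
case: (pselect (a = b)) => [<-|nab].
  by exists E => // c; rewrite inE => /orP [/eqP ->|/hE] //.
have [Eb eEb nEb] := haus_ent hX nab.
exists (E `&` Eb); first exact: filterI.
move=> c; rewrite inE => /orP [/eqP ->|/hE h] [E1 E2] //; last exact: h.
Qed.

Lemma ex_sep (X : uniformType) : hausdorff_space X -> na_uniform X ->
  forall s : seq X, exists R : set (X * X),
    [/\ entourage R, equiv_rel_set R & sepR R s].
Proof.
move=> hX hN; elim=> [|a t [Rt [eRt qRt sRt]]].
  have [R eR [qR _]] := hN _ (@entourageT X).
  by exists R; split => // a b.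
have [Ea eEa hEa] := ex_sep1 hX a t.
have [R eR [[r1 r2 r3] sub]] := hN _ (filterI eRt eEa).
exists R; split => //.
move=> x y; rewrite !inE => /orP [/eqP ->|xt] /orP [/eqP ->|yt] Rxy //.
- by apply: hEa => //; exact: (sub _ Rxy).2.
- by apply/esym/hEa => //; exact: (sub _ (r2 _ _ Rxy)).2.
- by apply: sRt => //; exact: (sub _ Rxy).1.
Qed.

Definition sig_of (G : TopGroup) (S : set G) := {x : G | x \in S}.
Definition subT (G : TopGroup) (S : set G) :=
  initial_topology (fun x : @sig_of G S => proj1_sig x).

Section SubG.
Context (G : TopGroup) (S : set G) (hS : is_subgroup (tg_ops G) S).
Local Notation T := (@subT G S).
Local Notation gm := (gmul (tg_ops G)).
Local Notation gi := (ginv (tg_ops G)).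

Definition smul (a b : T) : T :=
  exist _ (gm (sval a) (sval b))
    (mem_set (hS.2.1 _ _ (set_mem (svalP a)) (set_mem (svalP b)))).
Definition sinv (a : T) : T :=
  exist _ (gi (sval a)) (mem_set (hS.2.2 _ (set_mem (svalP a)))).
Definition sone : T := exist _ (gone (tg_ops G)) (mem_set hS.1).

Definition sops : group_ops T.
refine (@GroupOps _ smul sinv sone _ _ _).
- by move=> x y z; apply: val_inj; rewrite /= gmulA.
- by move=> x; apply: val_inj; rewrite /= gmul1.
- by move=> x; apply: val_inj; rewrite /= gmulV.
Defined.

Lemma sval_cont : continuous (fun x : T => (sval x : G)).
Proof. exact: initial_continuous. Qed.

Lemma smul_cont : continuous (fun p : T * T => smul p.1 p.2).
Proof.
move=> p; apply: (@continuous_comp_initial _ _ _ (fun x : @sig_of G S => proj1_sig x)).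
move=> q /=.
apply: (@continuous2_cvg _ G G G _ _ (fun p : T * T => sval p.1) (fun p : T * T => sval p.2) gm).
- exact: (@tg_mul_cont G (sval q.1, sval q.2)).
- apply: cvg_comp; [exact: cvg_fst | exact: sval_cont].
- apply: cvg_comp; [exact: cvg_snd | exact: sval_cont].
Qed.

Lemma sinv_cont : continuous sinv.
Proof.
move=> p; apply: (@continuous_comp_initial _ _ _ (fun x : @sig_of G S => proj1_sig x)).
move=> q /=; have h := cvg_comp _ _ (sval_cont (x:=q)) (@tg_inv_cont G (sval q)); exact: h.
Qed.

Lemma shaus : hausdorff_space T.
Proof.
move=> p q cl; apply: val_inj; apply: (@tg_hausdorff G) => A B nA nB.
have [z [Az Bz]] := cl _ _ (sval_cont nA) (sval_cont nB).
by exists (sval z).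
Qed.

Definition STG : TopGroup := @MkTopGroup T sops smul_cont sinv_cont shaus.

Lemma snbhs (U : set T) : nbhs sone U ->
  exists W : set G, [/\ open W, W (gone (tg_ops G)) & forall x : T, W (sval x) -> U x].
Proof.
move=> [? [[W oW <-] /= Wx sub]]; exists W; split => //.
Qed.
End SubG.

Lemma STG_class (c : NAclass) (G : TopGroup) (S : set G) (hS : is_subgroup (tg_ops G) S) :
  in_class c G -> in_class c (STG hS).
Proof.
case=> na hc; split.
  move=> U /snbhs [W [oW W1 sub]].
  have [V [oV [V1 [Vm Vi]] VW]] := na W (open_nbhs_nbhs (conj oW W1)).
  exists [set x : @subT G S | V (sval x)]; split.
  - by exists V.
  - split; first exact: V1.
    by split => [x y /= vx vy|x /= vx]; [exact: Vm | exact: Vi].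
  - by move=> x /= /VW; exact: sub.
case: c hc => //=.
- move=> bal; rewrite /balanced_group.
  have gen : forall (lr : bool), (if lr then @left_ent G else @right_ent G) `<=`
                      (if lr then @right_ent G else @left_ent G) ->
     (if lr then @left_ent (STG hS) else @right_ent (STG hS)) `<=`
     (if lr then @right_ent (STG hS) else @left_ent (STG hS)).
    case=> /= hsub E [U /snbhs [W [oW W1 sub]] hE].
      have [V nV VW] := hsub [set p | W (gmul (tg_ops G) (ginv (tg_ops G) p.1) p.2)]
                      (ex_intro2 _ _ W (open_nbhs_nbhs (conj oW W1)) (fun _ h => h)).
      exists [set x : @subT G S | V (sval x)]; first by apply: (@sval_cont G S (sone hS)); exact: nV.
      move=> [a b] /= vba; apply: hE => /=; apply: sub => /=.
      exact: (VW (sval a, sval b) vba).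
    have [V nV VW] := hsub [set p | W (gmul (tg_ops G) p.2 (ginv (tg_ops G) p.1))]
                    (ex_intro2 _ _ W (open_nbhs_nbhs (conj oW W1)) (fun _ h => h)).
    exists [set x : @subT G S | V (sval x)]; first by apply: (@sval_cont G S (sone hS)); exact: nV.
    move=> [a b] /= vba; apply: hE => /=; apply: sub => /=.
    exact: (VW (sval a, sval b) vba).
  apply/seteqP; split.
    by apply: (gen true); rewrite /= bal.
  by apply: (gen false); rewrite /= bal.
- by move=> ab x y; apply: val_inj; rewrite /= ab.
- move=> bo x nx; apply: val_inj => /=; apply: bo => e; apply: nx.
  by apply: val_inj.
Qed.

Lemma subgrp_all (c : NAclass) (X : uniformType) (G : TopGroup) (i : X -> G) :
  free_object (in_class c) i -> forall S : set G, is_subgroup (tg_ops G) S ->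
  (forall x, S (i x)) -> forall g, S g.
Proof.
move=> [cG ui U] S hS hi g.
pose j (x : X) : STG hS := exist _ (i x) (mem_set (hi x)).
have uj : unif_cont_tg j.
  move=> E [U' /snbhs [W [oW W1 sub]] hE].
  have e2 : two_ent [set p : G * G | W (gmul (tg_ops G) (ginv (tg_ops G) p.1) p.2)
                    /\ W (gmul (tg_ops G) p.2 (ginv (tg_ops G) p.1))].
    by exists W => //; exact: open_nbhs_nbhs.
  apply: filterS (ui _ e2) => -[x y] /= [h1 h2]; apply: hE; split; exact: sub.
have [r [hr cr rj _]] := U (STG hS) j (STG_class hS cG) uj.
have [phi [_ _ _ uq]] := U G i cG ui.
have e1 : sval (r g) = phi g.
  apply: (uq (fun g => sval (r g))).
  - by move=> a b; rewrite hr.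
  - move=> a; apply: (@continuous_comp _ (STG hS) G r (fun x => sval x)); first exact: cr.
    exact: sval_cont.
  - by move=> x; rewrite rj.
have e2 : id g = phi g.
  apply: uq => // a; exact: cvg_id.
move: e2 => /= e2.
rewrite e2 -e1; exact: set_mem (svalP (r g)).
Qed.

Definition fRs (X : Type) (H : Defs.Group) (f : X -> H) (R : set (X * X))
  (s : seq X) (x : X) : H :=
  let k := find (fun y => `[< R (x, y) >]) s in
  if (k < size s)%N then f (nth x s k) else gone (g_ops H).

Lemma fRs_inv (X : Type) (H : Defs.Group) (f : X -> H) R s x x' :
  equiv_rel_set R -> R (x, x') -> fRs f R s x = fRs f R s x'.
Proof.
move=> [r1 r2 r3] Rxx.
have E : (fun y => `[< R (x, y) >]) = (fun y => `[< R (x', y) >]).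
  apply: funext => y; apply: asbool_equiv_eq; split => h.
    exact: r3 (r2 _ _ Rxx) h.
  exact: r3 Rxx h.
rewrite /fRs E; case: ifP => // hk; by rewrite (set_nth_default x' x hk).
Qed.

Lemma fRs_sep (X : uniformType) (H : Defs.Group) (f : X -> H) R s y :
  equiv_rel_set R -> sepR R s -> y \in s -> fRs f R s y = f y.
Proof.
move=> [r1 r2 r3] sp ys.
have hs : has (fun z => `[< R (y, z) >]) s.
  by apply/hasP; exists y => //; apply/asboolP.
rewrite /fRs -has_find hs.
have /asboolP Ryn := nth_find y hs.
have hk : (find (fun z => `[< R (y, z) >]) s < size s)%N by rewrite -has_find.
have mem := mem_nth y hk.
by rewrite -(sp _ _ ys mem Ryn).
Qed.

Lemma fRs_val (X : Type) (H : Defs.Group) (f : X -> H) R s x :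
  fRs f R s x = gone (g_ops H) \/ exists y, fRs f R s x = f y.
Proof. rewrite /fRs; case: ifP => _; [right; eexists; reflexivity | by left]. Qed.

Lemma ext_free (c : NAclass) (X : uniformType) (G : TopGroup) (i : X -> G) :
  hausdorff_space X -> na_uniform X -> free_object (in_class c) i ->
  forall (H : Defs.Group) (f : X -> H), alg_class c H ->
  exists phi : G -> H,
    [/\ is_hom (tg_ops G) (g_ops H) phi, (forall x, phi (i x) = f x),
        (forall psi : G -> H, is_hom (tg_ops G) (g_ops H) psi ->
            (forall x, psi (i x) = f x) -> forall a, psi a = phi a) &
        forall g, exists R s (Psi : G -> H),
          [/\ entourage R, equiv_rel_set R, sepR R s,
              is_hom (tg_ops G) (g_ops H) Psi &
              [/\ (forall g', nbhs g' (Psi @^-1` [set Psi g'])),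
              (forall x, Psi (i x) = fRs f R s x) & Psi g = phi g]]].
Proof.
move=> hX hN fo H f hc.
have hP : forall p : set (X * X) * seq X, exists Psi : G -> H,
    entourage p.1 /\ equiv_rel_set p.1 ->
    [/\ is_hom (tg_ops G) (g_ops H) Psi,
        (forall g', nbhs g' (Psi @^-1` [set Psi g'])) &
        (forall x, Psi (i x) = fRs f p.1 p.2 x)].
  move=> [R s]; case: (pselect (entourage R /\ equiv_rel_set R)) => [[eR qR]|nR].
    have [Psi [h1 h2 h3]] := univ_disc fo hc eR (fun x y => fRs_inv f s qR).
    by exists Psi => _; split.
  by exists (fun _ => gone (g_ops H)) => /=.
have [Phi hPhi] := choice hP.
pose good (s : seq X) (g : G) (v : H) := forall (s' : seq X) R, {subset s <= s'} -> entourage R -> equiv_rel_set R ->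
   sepR R s' -> Phi (R, s') g = v.
have ug : forall s1 s2 g v1 v2, good s1 g v1 -> good s2 g v2 -> v1 = v2.
  move=> s1 s2 g v1 v2 g1 g2.
  have [R [eR qR sR]] := ex_sep hX hN (s1 ++ s2).
  rewrite -(g1 (s1 ++ s2) R) // ?(g2 (s1 ++ s2) R) // => x xs; rewrite mem_cat xs ?orbT //.
have gm : forall s1 s2 g h v1 v2, good s1 g v1 -> good s2 h v2 ->
    good (s1 ++ s2) (gmul (tg_ops G) g h) (gmul (g_ops H) v1 v2).
  move=> s1 s2 g h v1 v2 g1 g2 s' R ss eR qR sR.
  have [hh _ _] := hPhi (R, s') (conj eR qR).
  rewrite hh (g1 s' R) ?(g2 s' R) // => x xs; apply: ss; rewrite mem_cat xs ?orbT //.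
have allS : forall g, exists p : seq X * H, good p.1 g p.2.
  apply: (@subgrp_all c X G i fo (fun g => exists p : seq X * H, good p.1 g p.2)).
    split; [|split].
    - exists ([::], gone (g_ops H)) => s' R _ eR qR _ /=.
      by have [hh _ _] := hPhi (R, s') (conj eR qR); rewrite (hom1 hh).
    - move=> g h [[s1 v1] g1] [[s2 v2] g2]; exists (s1 ++ s2, gmul (g_ops H) v1 v2).
      exact: gm.
    - move=> g [[s1 v1] g1]; exists (s1, ginv (g_ops H) v1) => s' R ss eR qR sR /=.
      have [hh _ _] := hPhi (R, s') (conj eR qR).
      by rewrite (homV hh) (g1 s' R).
  move=> x; exists ([:: x], f x) => s' R ss eR qR sR /=.
  have [_ _ hi] := hPhi (R, s') (conj eR qR).
  by rewrite hi /= (fRs_sep f qR sR) //; apply: ss; rewrite inE.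
have [sv hsv] := choice allS.
exists (fun g => (sv g).2); split.
- move=> g h; apply: (ug _ _ _ _ _ (hsv (gmul (tg_ops G) g h))).
  exact: gm (hsv g) (hsv h).
- move=> x; apply: (ug _ [:: x] _ _ _ (hsv (i x))).
  move=> s' R ss eR qR sR.
  have [_ _ hi] := hPhi (R, s') (conj eR qR).
  by rewrite hi /= (fRs_sep f qR sR) //; apply: ss; rewrite inE.
- move=> psi hpsi hpi.
  apply: (@subgrp_all c X G i fo (fun a => psi a = (sv a).2)).
    split; [|split].
    - rewrite (hom1 hpsi); apply: (ug [::] _ _ _ _ _ (hsv _)).
      move=> s' R _ eR qR _.
      by have [hh _ _] := hPhi (R, s') (conj eR qR); rewrite (hom1 hh).
    - move=> g h /= e1 e2; rewrite hpsi e1 e2.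
      apply: (ug _ _ _ _ _ _ (hsv _)); exact: gm (hsv g) (hsv h).
    - move=> g /= e1; rewrite (homV hpsi) e1.
      apply: (ug (sv g).1 _ _ _ _ _ (hsv _)).
      move=> s' R ss eR qR sR.
      have [hh _ _] := hPhi (R, s') (conj eR qR).
      by rewrite (homV hh) ((hsv g) s' R).
  move=> x /=; rewrite hpi; apply: (ug [:: x] _ _ _ _ _ (hsv _)).
  move=> s' R ss eR qR sR.
  have [_ _ hi] := hPhi (R, s') (conj eR qR).
  by rewrite hi /= (fRs_sep f qR sR) //; apply: ss; rewrite inE.
- move=> g; have [R [eR qR sR]] := ex_sep hX hN (sv g).1.
  have [h1 h2 h3] := hPhi (R, (sv g).1) (conj eR qR).
  exists R, (sv g).1, (Phi (R, (sv g).1)); split => //; split => //.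
  exact: (hsv g).
Qed.

Lemma emb_ent (c : NAclass) (X : uniformType) (G : TopGroup) (i : X -> G) :
  na_uniform X -> free_object (in_class c) i ->
  forall E, entourage E -> exists2 D, two_ent D & forall x y, D (i x, i y) -> E (x, y).
Proof.
move=> hN fo E eE.
have [R eR [[r1 r2 r3] sub]] := hN E eE.
pose f (x : X) : BG X := fun z => `[< R (x, z) >].
have finv : forall x y, R (x, y) -> f x = f y.
  move=> x y Rxy; apply: funext => z; apply: asbool_equiv_eq; split => h.
    exact: r3 (r2 _ _ Rxy) h.
  exact: r3 Rxy h.
have [Psi [hh hi hc]] := univ_disc fo (BG_class c X) eR finv.
pose U := Psi @^-1` [set Psi (gone (tg_ops G))].
exists [set p | U (gmul (tg_ops G) (ginv (tg_ops G) p.1) p.2) /\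
                U (gmul (tg_ops G) p.2 (ginv (tg_ops G) p.1))].
  by exists U.
move=> x y [h1 _]; apply: sub; move: h1; rewrite /U /= hh (homV hh) !hi (hom1 hh).
move=> /(congr1 (fun F => F y)) /=; rewrite /f.
have -> : `[< R (y, y) >] = true by apply/asboolP.
by case: (asboolP (R (x, y))).
Qed.

Unset Implicit Arguments.
Theorem theorem3p9 (c : NAclass) (X : uniformType) (G : TopGroup) (i : X -> G) :
  hausdorff_space X -> na_uniform X -> free_object (in_class c) i ->
  [/\ unif_embedding i,
      alg_free (alg_class c) (tg_ops G) i &
      closed (range i)].
Proof.
move=> hX hN fo; split.
- split.
  + move=> x y ixy; case: (pselect (x = y)) => // nxy.
    have [E eE nE] := haus_ent hX nxy.
    have [D hD hDE] := emb_ent hN fo eE.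
    by exfalso; apply: nE; apply: hDE; rewrite ixy; exact: two_ent_diag.
  + by case: fo.
  + exact: emb_ent hN fo.
- move=> H f hc; have [phi [h1 h2 h3 _]] := ext_free hX hN fo f hc.
  by exists phi; split.
- move=> g cl; case: (pselect (range i g)) => // ng; exfalso.
  case: (pselect (g = gone (tg_ops G))) => [g1|g1].
    pose f (x : X) : BG X := fun _ => true.
    have [Psi [hh hi hc]] := univ_disc fo (BG_class c X) (@entourageT X)
       (fun x y _ => erefl : f x = f y).
    have [z [[x _ <-] /= e]] := cl _ (hc g).
    move: e; rewrite hi g1 (hom1 hh) => /(congr1 (fun F => F x)) //.
  pose H := Defs.MkGroup (tg_ops G).
  have hc : alg_class c H.
    case: fo => -[_ cG] _ _; case: c cG => //.
  have [phi [h1 h2 h3 h4]] := ext_free hX hN fo (i : X -> H) hc.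
  have pid : forall a, a = phi a.
    by move=> a; apply: (h3 id).
  have [R [s [Psi [eR qR sR hh [hc' hi e]]]]] := h4 g.
  rewrite -pid in e.
  have [z [[x _ <-] /= ex]] := cl _ (hc' g).
  move: ex; rewrite hi e; case: (fRs_val (i : X -> H) R s x) => [->|[y ->]].
    by move=> /esym.
  by move=> ey; apply: ng; exists y.
Qed.
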